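(* Every self-similar tree $T$ admits a rigid structure. That is, there is a family $\{\varphi_{vw}\}$ consisting of one morphism $\varphi_{vw}\in\mathrm{Mor}(v,w)$ for each ordered pair $(v,w)$ of vertices of $T$ of the same type, satisfying two conditions: (1) $\varphi_{vw}\circ\varphi_{uv}=\varphi_{uw}$ for all triples $u,v,w$ of the same type; (2) whenever $v'$ is a descendant of $v$ and $w'=\varphi_{vw}(v')$, the morphism $\varphi_{v'w'}$ is the restriction of $\varphi_{vw}$ to $T_{v'}$.
   Context: A self-similar tree is a locally finite rooted tree $T$ (identified with its vertex set) with a partition of the vertices into finitely many types, and for each pair $u,v$ of same-type vertices a nonempty finite set $\mathrm{Mor}(u,v)$ of rooted tree isomorphisms $T_u\to T_v$ (morphisms) preserving types, where $T_v$ is the subtree of $v$ and its descendants. The morphisms satisfy: (a) inverses of morphisms are morphisms; (b) compositions $\psi\varphi$ with $\varphi\in\mathrm{Mor}(u,v)$, $\psi\in\mathrm{Mor}(v,w)$ lie in $\mathrm{Mor}(u,w)$; (c) restrictions of a morphism $\varphi\in\mathrm{Mor}(v,w)$ to $T_u$, $u\in T_v$, lie in $\mathrm{Mor}(u,\varphi(u))$. *)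

(* Defs.v *)
From Stdlib Require Import List.

Record rtree := {
  V : Type;
  root : V;
  parent : V -> V;
  parent_root : parent root = root;
  reach_root : forall x : V, exists n, Nat.iter n parent x = root;
  loc_finite : forall v : V, exists l : list V,
      forall x : V, x <> root -> parent x = v -> In x l
}.

Definition desc (T : rtree) (u x : V T) : Prop :=
  exists n, Nat.iter n (parent T) x = u.

Definition sub (T : rtree) (u : V T) : Type := { x : V T | desc T u x }.

Definition child (T : rtree) (x y : V T) : Prop :=
  parent T y = x /\ y <> x.

Definition is_rooted_iso (T : rtree) (u v : V T) (f : sub T u -> sub T v) : Prop :=
  (exists g : sub T v -> sub T u,
      (forall x, g (f x) = x) /\ (forall y, f (g y) = y)) /\
  (forall x : sub T u, proj1_sig x = u -> proj1_sig (f x) = v) /\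
  (forall x y : sub T u,
      child T (proj1_sig x) (proj1_sig y) <->
      child T (proj1_sig (f x)) (proj1_sig (f y))).

Definition is_restriction (T : rtree) (v w v' w' : V T)
    (psi : sub T v' -> sub T w') (phi : sub T v -> sub T w) : Prop :=
  forall (z : sub T v') (hz : desc T v (proj1_sig z)),
    proj1_sig (psi z) = proj1_sig (phi (exist _ (proj1_sig z) hz)).

Record selfsim (T : rtree) := {
  Ty : Type;
  Ty_finite : exists l : list Ty, forall t : Ty, In t l;
  typ : V T -> Ty;
  Mor : forall u v : V T, (sub T u -> sub T v) -> Prop;
  Mor_same_type : forall u v f, Mor u v f -> typ u = typ v;
  Mor_nonempty : forall u v, typ u = typ v -> exists f, Mor u v f;
  Mor_finite : forall u v, exists l : list (sub T u -> sub T v),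
      forall f, Mor u v f -> In f l;
  Mor_iso : forall u v f, Mor u v f -> is_rooted_iso T u v f;
  Mor_typ : forall u v f, Mor u v f ->
      forall x : sub T u, typ (proj1_sig (f x)) = typ (proj1_sig x);
  Mor_inv : forall u v f, Mor u v f ->
      exists g, Mor v u g /\ (forall x, g (f x) = x) /\ (forall y, f (g y) = y);
  Mor_comp : forall u v w f g, Mor u v f -> Mor v w g ->
      Mor u w (fun x => g (f x));
  Mor_restr : forall v w f, Mor v w f -> forall y : sub T v,
      exists psi, Mor (proj1_sig y) (proj1_sig (f y)) psi /\
                  is_restriction T v w (proj1_sig y) (proj1_sig (f y)) psi f
}.

(* Main.v *)
Require Import Defs.
From Stdlib Require Import List Arith ClassicalEpsilon ProofIrrelevance FunctionalExtensionality.

Lemma sub_eq (T : rtree) (u : V T) (a b : sub T u) :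
  proj1_sig a = proj1_sig b -> a = b.
Proof.
  destruct a as [a ha], b as [b hb]; simpl; intros ->.
  f_equal; apply proof_irrelevance.
Qed.

Lemma desc_refl (T : rtree) (u : V T) : desc T u u.
Proof. exists 0; reflexivity. Qed.

Lemma desc_trans (T : rtree) (u y a : V T) : desc T u y -> desc T y a -> desc T u a.
Proof.
  intros [m Hm] [n Hn]; exists (m + n).
  rewrite Nat.iter_add, Hn; exact Hm.
Qed.

Lemma desc_parent (T : rtree) (x : V T) : desc T (parent T x) x.
Proof. exists 1; reflexivity. Qed.

Definition tosub (T : rtree) (w x : V T) : sub T w :=
  match excluded_middle_informative (desc T w x) with
  | left h => exist _ x h
  | right _ => exist _ w (desc_refl T w)
  end.

Lemma tosub_eq (T : rtree) (w x : V T) : desc T w x -> proj1_sig (tosub T w x) = x.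
Proof.
  intros h; unfold tosub; destruct (excluded_middle_informative (desc T w x)); simpl;
  [reflexivity | contradiction].
Qed.

Definition einv (T : rtree) (u : V T) (U : V T -> V T) (x : V T) : V T :=
  epsilon (inhabits x) (fun a => desc T u a /\ U a = x).

Definition realizes (T : rtree) (S : selfsim T) (u v : V T) (U : V T -> V T) : Prop :=
  exists f, Mor T S u v f /\ forall a : sub T u, proj1_sig (f a) = U (proj1_sig a).


Lemma real_in T S u v U a : realizes T S u v U -> desc T u a -> desc T v (U a).
Proof.
  intros [f [Hf Hu]] h. pose proof (Hu (exist _ a h)) as E0; simpl in E0; rewrite <- E0. exact (proj2_sig _).
Qed.

Lemma real_root T S u v U : realizes T S u v U -> U u = v.
Proof.
  intros [f [Hf Hu]]. destruct (Mor_iso T S _ _ _ Hf) as [_ [Hr _]].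
  pose proof (Hu (exist _ u (desc_refl T u))) as E0; simpl in E0; rewrite <- E0. apply Hr. reflexivity.
Qed.

Lemma real_typ T S u v U a : realizes T S u v U -> desc T u a -> typ T S (U a) = typ T S a.
Proof.
  intros [f [Hf Hu]] h. pose proof (Hu (exist _ a h)) as E0; simpl in E0; rewrite <- E0.
  exact (Mor_typ T S _ _ _ Hf (exist _ a h)).
Qed.

Lemma real_inj T S u v U a b : realizes T S u v U -> desc T u a -> desc T u b ->
  U a = U b -> a = b.
Proof.
  intros [f [Hf Hu]] ha hb E. destruct (Mor_iso T S _ _ _ Hf) as [[g [Hg _]] _].
  assert (f (exist _ a ha) = f (exist _ b hb)) as E2.
  { apply sub_eq; rewrite !Hu; exact E. }
  apply (f_equal g) in E2. rewrite !Hg in E2. apply (f_equal (@proj1_sig _ _)) in E2.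
  exact E2.
Qed.

Lemma real_surj T S u v U b : realizes T S u v U -> desc T v b ->
  exists a, desc T u a /\ U a = b.
Proof.
  intros [f [Hf Hu]] hb. destruct (Mor_iso T S _ _ _ Hf) as [[g [_ Hg]] _].
  exists (proj1_sig (g (exist _ b hb))). split. exact (proj2_sig _).
  rewrite <- Hu, Hg. reflexivity.
Qed.

Lemma real_child T S u v U a b : realizes T S u v U -> desc T u a -> desc T u b ->
  parent T b = a -> b <> a -> parent T (U b) = U a /\ U b <> U a.
Proof.
  intros [f [Hf Hu]] ha hb E N. destruct (Mor_iso T S _ _ _ Hf) as [_ [_ Hc]].
  destruct (proj1 (Hc (exist _ a ha) (exist _ b hb)) (conj E N)) as [E' N'].
  rewrite !Hu in E', N'. simpl in *. split; assumption.
Qed.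

Lemma real_comp T S u v w U W : realizes T S u v U -> realizes T S v w W ->
  realizes T S u w (fun x => W (U x)).
Proof.
  intros [f [Hf Hu]] [g [Hg Hw]]. exists (fun x => g (f x)). split.
  - apply (Mor_comp T S _ _ _ _ _ Hf Hg).
  - intros a. rewrite Hw, Hu. reflexivity.
Qed.

Lemma real_restr T S u v U y : realizes T S u v U -> desc T u y -> realizes T S y (U y) U.
Proof.
  intros [f [Hf Hu]] hy.
  destruct (Mor_restr T S _ _ _ Hf (exist _ y hy)) as [psi [Hpsi Hr]]. simpl in *.
  pose proof (Hu (exist _ y hy)) as E0; simpl in E0.
  assert (realizes T S y (proj1_sig (f (exist _ y hy))) U) as R.
  { exists psi. split. exact Hpsi.
    intros z. rewrite (Hr z (desc_trans T _ _ _ hy (proj2_sig z))), Hu. reflexivity. }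
  rewrite E0 in R. exact R.
Qed.

Lemma einv_spec T S u v U x : realizes T S u v U -> desc T v x ->
  desc T u (einv T u U x) /\ U (einv T u U x) = x.
Proof.
  intros H hx. unfold einv. apply epsilon_spec. exact (real_surj T S u v U x H hx).
Qed.

Lemma einv_U T S u v U a : realizes T S u v U -> desc T u a -> einv T u U (U a) = a.
Proof.
  intros H ha. destruct (einv_spec T S u v U (U a) H (real_in T S u v U a H ha)) as [h1 h2].
  exact (real_inj T S u v U _ _ H h1 ha h2).
Qed.

Lemma real_inv T S u v U : realizes T S u v U -> realizes T S v u (einv T u U).
Proof.
  intros H. pose proof H as [f [Hf Hu]].
  destruct (Mor_inv T S _ _ _ Hf) as [g [Hg [_ Hfg]]].
  exists g. split. exact Hg. intros b.
  destruct (einv_spec T S u v U (proj1_sig b) H (proj2_sig b)) as [h1 h2].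
  apply (real_inj T S u v U _ _ H (proj2_sig _) h1).
  rewrite h2, <- Hu, Hfg. reflexivity.
Qed.

Lemma real_ext T S u v U U' : realizes T S u v U -> (forall a, desc T u a -> U a = U' a) ->
  realizes T S u v U'.
Proof.
  intros [f [Hf Hu]] E. exists f. split. exact Hf. intros a. rewrite Hu. apply E, proj2_sig.
Qed.

Lemma real_id T S u : realizes T S u u (fun x => x).
Proof.
  destruct (Mor_nonempty T S u u eq_refl) as [f Hf].
  destruct (Mor_inv T S _ _ _ Hf) as [g [Hg [Hgf _]]].
  exists (fun x => g (f x)). split. exact (Mor_comp T S _ _ _ _ _ Hf Hg).
  intros a. rewrite Hgf. reflexivity.
Qed.

Lemma real_exists T S u v : typ T S u = typ T S v -> exists U, realizes T S u v U.
Proof.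
  intros E. destruct (Mor_nonempty T S u v E) as [f Hf].
  exists (fun x => match excluded_middle_informative (desc T u x) with
                   | left h => proj1_sig (f (exist _ x h)) | right _ => x end).
  exists f. split. exact Hf. intros [a ha]. simpl.
  destruct (excluded_middle_informative (desc T u a)) as [h|h]; [|contradiction].
  f_equal; f_equal; f_equal; apply proof_irrelevance.
Qed.

Lemma real_Mor T S u v U : realizes T S u v U ->
  Mor T S u v (fun a => tosub T v (U (proj1_sig a))).
Proof.
  intros H. pose proof H as [f [Hf Hu]].
  replace (fun a : sub T u => tosub T v (U (proj1_sig a))) with f. exact Hf.
  apply functional_extensionality. intros a. apply sub_eq.
  rewrite tosub_eq, Hu; [reflexivity|]. apply (real_in T S u v U _ H (proj2_sig a)).
Qed.

Definition rep (T : rtree) (Sm : selfsim T) (t : Ty T Sm) : V T :=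
  epsilon (inhabits (root T)) (fun x => typ T Sm x = t).

Lemma rep_typ T Sm x : typ T Sm (rep T Sm (typ T Sm x)) = typ T Sm x.
Proof. unfold rep. apply epsilon_spec. exists x; reflexivity. Qed.

Definition Cm (T : rtree) (Sm : selfsim T) (x : V T) : V T -> V T :=
  epsilon (inhabits (fun z => z)) (fun U => realizes T Sm (rep T Sm (typ T Sm x)) x U).

Lemma Cm_spec T Sm x : realizes T Sm (rep T Sm (typ T Sm x)) x (Cm T Sm x).
Proof. unfold Cm. apply epsilon_spec. apply real_exists. apply rep_typ. Qed.

Fixpoint F (T : rtree) (Sm : selfsim T) (n : nat) (x : V T) : V T -> V T :=
  match n with
  | 0 => Cm T Sm x
  | S m =>
    match excluded_middle_informative (x = root T) with
    | left _ => Cm T Sm x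
    | right _ =>
      fun z => F T Sm m (parent T x)
        (Cm T Sm (einv T (rep T Sm (typ T Sm (parent T x))) (F T Sm m (parent T x)) x) z)
    end
  end.

Lemma F_S T Sm m x : F T Sm (S m) x =
    match excluded_middle_informative (x = root T) with
    | left _ => Cm T Sm x
    | right _ =>
      fun z => F T Sm m (parent T x)
        (Cm T Sm (einv T (rep T Sm (typ T Sm (parent T x))) (F T Sm m (parent T x)) x) z)
    end.
Proof. reflexivity. Qed.

Lemma F_stab T Sm n x : Nat.iter n (parent T) x = root T -> F T Sm n x = F T Sm (S n) x.
Proof.
  revert x; induction n as [|n IH]; intros x Hx.
  - simpl in Hx. subst x. simpl.
    destruct (excluded_middle_informative (root T = root T)); [reflexivity|congruence].
  - rewrite (F_S T Sm n x), (F_S T Sm (S n) x). destruct (excluded_middle_informative (x = root T)); [reflexivity|].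
    rewrite Nat.iter_succ_r in Hx. rewrite <- (IH _ Hx). reflexivity.
Qed.

Lemma F_stab2 T Sm n m x : Nat.iter n (parent T) x = root T -> Nat.iter m (parent T) x = root T ->
  F T Sm n x = F T Sm m x.
Proof.
  assert (forall k n, Nat.iter n (parent T) x = root T -> F T Sm n x = F T Sm (k + n) x) as K.
  { induction k as [|k IH]; intros n' H; [reflexivity|].
    rewrite (IH n' H). apply F_stab. rewrite Nat.iter_add, H.
    clear. induction k; simpl; [reflexivity|]. rewrite IHk. apply parent_root. }
  intros H1 H2. rewrite (K m n H1), (K n m H2), Nat.add_comm. reflexivity.
Qed.

Definition dep (T : rtree) (x : V T) : nat :=
  epsilon (inhabits 0) (fun n => Nat.iter n (parent T) x = root T).

Lemma dep_spec T x : Nat.iter (dep T x) (parent T) x = root T.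
Proof. unfold dep. apply epsilon_spec. apply reach_root. Qed.

Definition Psi (T : rtree) (Sm : selfsim T) (x : V T) : V T -> V T := F T Sm (dep T x) x.

Lemma F_spec T Sm n x : Nat.iter n (parent T) x = root T ->
  realizes T Sm (rep T Sm (typ T Sm x)) x (F T Sm n x).
Proof.
  revert x; induction n as [|n IH]; intros x Hx.
  - apply Cm_spec.
  - rewrite F_S. destruct (excluded_middle_informative (x = root T)); [apply Cm_spec|].
    rewrite Nat.iter_succ_r in Hx. specialize (IH _ Hx).
    set (p := parent T x) in *. set (P := F T Sm n p) in *.
    set (y := einv T (rep T Sm (typ T Sm p)) P x).
    destruct (einv_spec T Sm _ _ P x IH (desc_parent T x)) as [h1 h2]. fold y in h1, h2.
    pose proof (real_restr T Sm _ _ P y IH h1) as R. rewrite h2 in R.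
    pose proof (real_typ T Sm _ _ P y IH h1) as Ty. rewrite h2 in Ty.
    pose proof (real_comp T Sm _ _ _ _ _ (Cm_spec T Sm y) R) as R2.
    rewrite <- Ty in R2. exact R2.
Qed.

Lemma Psi_spec T Sm x : realizes T Sm (rep T Sm (typ T Sm x)) x (Psi T Sm x).
Proof. apply F_spec, dep_spec. Qed.

Lemma Psi_unfold T Sm x z : x <> root T ->
  Psi T Sm x z = Psi T Sm (parent T x)
     (Cm T Sm (einv T (rep T Sm (typ T Sm (parent T x))) (Psi T Sm (parent T x)) x) z).
Proof.
  intros N. unfold Psi at 1. rewrite (F_stab T Sm _ _ (dep_spec T x)), F_S.
  destruct (excluded_middle_informative (x = root T)); [contradiction|].
  assert (F T Sm (dep T x) (parent T x) = Psi T Sm (parent T x)) as E.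
  { unfold Psi. apply F_stab2; [|apply dep_spec].
    rewrite <- Nat.iter_succ_r, Nat.iter_succ, dep_spec. apply parent_root. }
  rewrite E. reflexivity.
Qed.

Lemma iter_fix T (y : V T) k : parent T y = y -> Nat.iter k (parent T) y = y.
Proof. intros H; induction k; simpl; [reflexivity|]. rewrite IHk; exact H. Qed.

Lemma Cond T Sm s n y : typ T Sm (rep T Sm s) = s ->
  Nat.iter n (parent T) y = rep T Sm s ->
  exists Th, realizes T Sm (rep T Sm (typ T Sm y)) y Th /\
    forall v, typ T Sm v = s -> forall z, desc T (rep T Sm (typ T Sm y)) z ->
      Psi T Sm (Psi T Sm v y) z = Psi T Sm v (Th z).
Proof.
  intros Hs. revert y; induction n as [|n IH]; intros y Hy.
  - simpl in Hy. subst y. exists (fun z => z). rewrite Hs. split. apply real_id.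
    intros v Hv z _. assert (Psi T Sm v (rep T Sm s) = v) as Er by (rewrite <- Hv; exact (real_root T Sm _ _ _ (Psi_spec T Sm v))). rewrite Er. reflexivity.
  - destruct (excluded_middle_informative (y = rep T Sm s)) as [Ey|Ny].
    { subst y. exists (fun z => z). rewrite Hs. split. apply real_id.
      intros v Hv z _. assert (Psi T Sm v (rep T Sm s) = v) as Er by (rewrite <- Hv; exact (real_root T Sm _ _ _ (Psi_spec T Sm v))). rewrite Er. reflexivity. }
    pose proof Hy as Hy'. rewrite Nat.iter_succ_r in Hy'.
    set (y0 := parent T y) in *.
    destruct (IH y0 Hy') as [Th0 [R0 H0]].
    set (y' := einv T (rep T Sm (typ T Sm y0)) Th0 y).
    destruct (einv_spec T Sm _ _ Th0 y R0 (desc_parent T y)) as [h1 h2]. fold y' in h1, h2.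
    pose proof (real_restr T Sm _ _ Th0 y' R0 h1) as Rr. rewrite h2 in Rr.
    pose proof (real_typ T Sm _ _ Th0 y' R0 h1) as Ty. rewrite h2 in Ty.
    exists (fun z => Th0 (Cm T Sm y' z)). split.
    { pose proof (real_comp T Sm _ _ _ _ _ (Cm_spec T Sm y') Rr) as R2.
      rewrite <- Ty in R2. exact R2. }
    intros v Hv z Hz.
    pose proof (Psi_spec T Sm v) as Pv. rewrite Hv in Pv.
    assert (desc T (rep T Sm s) y0) as Dy0 by (exists n; exact Hy').
    assert (desc T (rep T Sm s) y) as Dy by (exists (S n); exact Hy).
    assert (parent T y <> y) as Npy.
    { intros E. apply Ny. rewrite <- Hy. symmetry. apply iter_fix, E. }
    destruct (real_child T Sm _ _ _ y0 y Pv Dy0 Dy eq_refl (fun E => Npy (eq_sym E))) as [Ep Np].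
    set (x := Psi T Sm v y) in *. set (p := Psi T Sm v y0) in *.
    assert (x <> root T) as Nx.
    { intros E. apply Np. rewrite <- Ep, E. symmetry. apply parent_root. }
    rewrite (Psi_unfold T Sm x z Nx), Ep.
    pose proof (Psi_spec T Sm p) as Pp.
    assert (typ T Sm p = typ T Sm y0) as Tp by (apply (real_typ T Sm _ _ _ y0 Pv Dy0)).
    rewrite Tp in Pp |- *.
    assert (Psi T Sm p y' = x) as Epy.
    { unfold p. rewrite (H0 v Hv y' h1), h2. reflexivity. }
    rewrite <- Epy, (einv_U T Sm _ _ _ y' Pp h1).
    apply H0. exact Hv.
    apply (desc_trans T _ y'). exact h1.
    apply (real_in T Sm _ _ _ _ (Cm_spec T Sm y')). rewrite <- Ty. exact Hz.
Qed.

Theorem mainTheorem11 (T : rtree) (S : selfsim T) :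
  exists phi : forall v w : V T, sub T v -> sub T w,
    (forall v w, typ T S v = typ T S w -> Mor T S v w (phi v w)) /\
    (forall u v w, typ T S u = typ T S v -> typ T S v = typ T S w ->
       forall x : sub T u, phi v w (phi u v x) = phi u w x) /\
    (forall v w, typ T S v = typ T S w ->
       forall v' : sub T v,
         is_restriction T v w (proj1_sig v') (proj1_sig (phi v w v'))
           (phi (proj1_sig v') (proj1_sig (phi v w v'))) (phi v w)).
Proof.
  set (Q := fun v w : V T => fun x => Psi T S w (einv T (rep T S (typ T S v)) (Psi T S v) x)).
  assert (RQ : forall v w, typ T S v = typ T S w -> realizes T S v w (Q v w)).
  { intros v w E. unfold Q. pose proof (Psi_spec T S w) as Pw. rewrite <- E in Pw.
    exact (real_comp T S _ _ _ _ _ (real_inv T S _ _ _ (Psi_spec T S v)) Pw). }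
  exists (fun v w a => tosub T w (Q v w (proj1_sig a))). split; [|split].
  - intros v w E. exact (real_Mor T S _ _ _ (RQ v w E)).
  - intros u v w E1 E2 x. apply sub_eq.
    rewrite (tosub_eq T v) by (apply (real_in T S _ _ _ _ (RQ u v E1) (proj2_sig x))).
    unfold Q. rewrite <- E1.
    destruct (einv_spec T S _ _ _ (proj1_sig x) (Psi_spec T S u) (proj2_sig x)) as [h1 _].
    pose proof (Psi_spec T S v) as Pv. rewrite <- E1 in Pv. rewrite (einv_U T S _ _ _ _ Pv h1). reflexivity.
  - intros v w E v' z hz.
    destruct v' as [a ha]. simpl in *.
    destruct (einv_spec T S _ _ _ a (Psi_spec T S v) ha) as [h1 h2].
    set (y := einv T (rep T S (typ T S v)) (Psi T S v) a) in *.
    assert (Ew' : Q v w a = Psi T S w y) by reflexivity.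
    rewrite (tosub_eq T w) by (apply (real_in T S _ _ _ _ (RQ v w E) ha)).
    rewrite Ew'. clear Ew'.
    destruct h1 as [n Hn].
    destruct (Cond T S (typ T S v) n y (rep_typ T S v) Hn) as [Th [RT HT]].
    pose proof (Psi_spec T S w) as Pw. rewrite <- E in Pw.
    assert (Ta : typ T S a = typ T S y).
    { rewrite <- h2. apply (real_typ T S _ _ _ _ (Psi_spec T S v)). exists n; exact Hn. }
    pose proof (Psi_spec T S a) as Pa. rewrite Ta in Pa.
    destruct (einv_spec T S _ _ _ (proj1_sig z) Pa (proj2_sig z)) as [q1 q2].
    set (q := einv T (rep T S (typ T S y)) (Psi T S a) (proj1_sig z)) in *.
    assert (Dy : desc T (rep T S (typ T S v)) y) by (exists n; exact Hn).
    assert (Dq : desc T (rep T S (typ T S v)) (Th q))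
      by (apply (desc_trans T _ y _ Dy), (real_in T S _ _ _ _ RT q1)).
    pose proof (HT v eq_refl q q1) as Hq. rewrite h2 in Hq. rewrite Hq in q2.
    unfold Q. rewrite Ta. fold q. rewrite <- q2.
    rewrite (einv_U T S _ _ _ _ (Psi_spec T S v) Dq).
    assert (Pwy : Psi T S w y = Psi T S w y) by reflexivity.
    rewrite (tosub_eq T w) by (apply (real_in T S _ _ _ _ Pw Dq)).
    rewrite (tosub_eq T (Psi T S w y)).
    + rewrite (HT w (eq_sym E) q q1). reflexivity.
    + pose proof (Psi_spec T S (Psi T S w y)) as P2.
      rewrite (real_typ T S _ _ _ _ Pw Dy) in P2.
      apply (real_in T S _ _ _ _ P2 q1).
Qed.
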